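(* Let $n \ge 3$ be odd and let $T$ be the $n$-vertex tree obtained from the star $K_{1,(n-1)/2}$ by subdividing each edge exactly once (by one new vertex). Then $$\chi_{2K_2}(T) = \left\lceil \sqrt{n - \tfrac34} + \tfrac12 \right\rceil.$$
   Context: All graphs are finite and simple. For a fixed bipartite graph $H$, a proper vertex coloring of a graph $G$ is called an $H$-avoiding coloring if for any two color classes, the subgraph of $G$ induced by their union contains no induced subgraph isomorphic to $H$. $\chi_H(G)$ denotes the minimum number of colors in an $H$-avoiding coloring of $G$. $2K_2$ is the disjoint union of two edges; $K_{1,m}$ is the star with $m$ leaves. *)

(* Defs.v *)
From Stdlib Require Import Reals.
From HB Require Import structures.
From mathcomp Require Import all_boot all_order all_algebra.
From mathcomp Require Import Rstruct.
Set Implicit Arguments. Unset Strict Implicit. Unset Printing Implicit Defensive.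
Import Order.TTheory GRing.Theory Num.Theory.

Definition simple_graph (V : finType) (e : rel V) : Prop :=
  symmetric e /\ irreflexive e.

Definition proper_coloring (V : finType) (e : rel V) (k : nat) (c : V -> 'I_k) : Prop :=
  forall x y, e x y -> c x != c y.

Definition has_induced_copy (V U : finType) (e : rel V) (eH : rel U) (S : pred V) : Prop :=
  exists f : U -> V, [/\ injective f, (forall u, S (f u)) &
                         (forall u w, e (f u) (f w) = eH u w)].

Definition H_avoiding (V U : finType) (e : rel V) (eH : rel U) (k : nat) (c : V -> 'I_k) : Prop :=
  proper_coloring e c /\
  forall i j : 'I_k, i != j ->
    ~ has_induced_copy e eH (fun v => (c v == i) || (c v == j)).

Definition H_colorable (V U : finType) (e : rel V) (eH : rel U) (k : nat) : Prop :=
  exists c : V -> 'I_k, H_avoiding e eH c.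

Definition is_chi_H (V U : finType) (e : rel V) (eH : rel U) (k : nat) : Prop :=
  H_colorable e eH k /\ forall k', H_colorable e eH k' -> k <= k'.

Definition twoK2 : rel 'I_4 := fun x y =>
  [|| (val x == 0) && (val y == 1), (val x == 1) && (val y == 0),
      (val x == 2) && (val y == 3) | (val x == 3) && (val y == 2)].

(* For odd n = 2m+1: star K_{1,m} with every edge subdivided once.
   Vertex 0 is the centre, vertices 1..m are the subdivision vertices,
   vertex i+m is the leaf attached to i (1 <= i <= m). *)
Definition subdivided_star (n : nat) : rel 'I_n := fun x y =>
  let m := n./2 in
  [|| (val x == 0) && (1 <= val y <= m), (val y == 0) && (1 <= val x <= m),
      (1 <= val x <= m) && (val y == val x + m)
    | (1 <= val y <= m) && (val x == val y + m)].
Arguments subdivided_star n : clear implicits.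

(* Main.v *)
Require Import Defs.
From Stdlib Require Import Reals.
From HB Require Import structures.
From mathcomp Require Import all_boot all_order all_algebra.
From mathcomp Require Import Rstruct.
From mathcomp Require Import zify ring lra.
Import Order.TTheory GRing.Theory Num.Theory.

Definition E m x y := [|| (x == 0) && (1 <= y <= m), (y == 0) && (1 <= x <= m),
      (1 <= x <= m) && (y == x + m) | (1 <= y <= m) && (x == y + m)].

Lemma edgeE m (x y : 'I_(m+m).+1) : subdivided_star _ x y = E m (val x) (val y).
Proof. have h : ((m+m).+1)./2 = m by lia. by rewrite /subdivided_star /E h. Qed.

Lemma twE (u w : nat) : u < 4 -> w < 4 -> twoK2 (inord u : 'I_4) (inord w) =
   [|| (u == 0) && (w == 1), (u == 1) && (w == 0), (u == 2) && (w == 3) | (u == 3) && (w == 2)].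
Proof.
move=> hu hw; have hu' : \val (inord u : 'I_4) = u := inordK hu.
have hw' : \val (inord w : 'I_4) = w := inordK hw.
by rewrite /twoK2 hu' hw'.
Qed.
Lemma key m x y z w : E m x y -> E m z w -> ~~ E m x z -> ~~ E m x w -> ~~ E m y z -> ~~ E m y w ->
  x != z -> x != w -> y != z -> y != w ->
  [/\ 1 <= minn x y <= m, 1 <= minn z w <= m, minn x y != minn z w,
      ((minn x y == x) || (minn x y == y)) && ((minn x y+m == x) || (minn x y+m == y)) &
      ((minn z w == z) || (minn z w == w)) && ((minn z w+m == z) || (minn z w+m == w))].
Proof.
move=> exy ezw nxz nxw nyz nyw dxz dxw dyz dyw.
move: exy ezw; rewrite {1 2}/E.
case/or4P => [/andP[/eqP ? /andP[h1 h2]] | /andP[/eqP ? /andP[h1 h2]] | /andP[/andP[h1 h2] /eqP ?] | /andP[/andP[h1 h2] /eqP ?]];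
case/or4P => [/andP[/eqP ? /andP[h3 h4]] | /andP[/eqP ? /andP[h3 h4]] | /andP[/andP[h3 h4] /eqP ?] | /andP[/andP[h3 h4] /eqP ?]]; subst;
first [ by case/negP: nxz; rewrite /E; lia
      | by case/negP: nxw; rewrite /E; lia
      | by case/negP: nyz; rewrite /E; lia
      | by case/negP: nyw; rewrite /E; lia
      | clear nxz nxw nyz nyw; lia
      | clear nxz nxw nyz nyw; split; lia ].
Qed.

Lemma extract m (f : 'I_4 -> 'I_(m+m).+1) : injective f ->
  (forall u w, subdivided_star _ (f u) (f w) = twoK2 u w) ->
  let x := val (f (inord 0)) in let y := val (f (inord 1)) in
  let z := val (f (inord 2)) in let w := val (f (inord 3)) in
  [/\ 1 <= minn x y <= m, 1 <= minn z w <= m, minn x y != minn z w,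
      ((minn x y == x) || (minn x y == y)) && ((minn x y+m == x) || (minn x y+m == y)) &
      ((minn z w == z) || (minn z w == w)) && ((minn z w+m == z) || (minn z w+m == w))].
Proof.
move=> finj H x y z w.
have D u v : u < 4 -> v < 4 -> u != v -> val (f (inord u)) != val (f (inord v)).
  move=> hu hv huv; rewrite val_eqE (inj_eq finj); apply: contra huv => /eqP /(congr1 val).
  have hu' : \val (inord u : 'I_4) = u := inordK hu.
  have hv' : \val (inord v : 'I_4) = v := inordK hv.
  by rewrite hu' hv' => ->.
apply: key; rewrite /x /y /z /w.
all: first [ by rewrite -edgeE H twE | by apply: D ].
Qed.

Lemma col_bound m k (c : 'I_(m+m).+1 -> 'I_k) :
  H_avoiding (subdivided_star _) twoK2 c -> m <= 'C(k,2).
Proof.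
case=> prop av.
pose br (i : 'I_m) : 'I_(m+m).+1 := inord i.+1.
pose lf (i : 'I_m) : 'I_(m+m).+1 := inord (i.+1 + m).
have vbr (i : 'I_m) : val (br i) = i.+1 by apply: inordK; have := ltn_ord i; lia.
have vlf (i : 'I_m) : val (lf i) = i.+1 + m by apply: inordK; have := ltn_ord i; lia.
pose g i := [set c (br i); c (lf i)].
have ne i : c (br i) != c (lf i).
  by apply: prop; rewrite edgeE vbr vlf /E; have := ltn_ord i; lia.
have ginj : injective g.
  move=> i j hij; apply/eqP; apply/negPn/negP => nij.
  have nij' : (i : nat) != j by [].
  apply: (av (c (br i)) (c (lf i)) (ne i)).
  pose s := [:: i.+1; i.+1 + m; j.+1; j.+1 + m].
  have hb (u : 'I_4) : nth 0 s u < (m+m).+1.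
    by case: u => [[|[|[|[|?]]]] hu] /=; have := ltn_ord i; have := ltn_ord j; lia.
  exists (fun u : 'I_4 => inord (nth 0 s u) : 'I_(m+m).+1).
  have vf (u : 'I_4) : \val (inord (nth 0 s u) : 'I_(m+m).+1) = nth 0 s u := inordK (hb u).
  split.
  - move=> u w /(congr1 val); rewrite !vf => h; apply/val_inj.
    move: h; rewrite /s; case: u => [[|[|[|[|?]]]] hu] //; case: w => [[|[|[|[|?]]]] hw] //= ; have := ltn_ord i; have := ltn_ord j; lia.
  - have hj : c (br j) \in g i by rewrite hij /g !inE eqxx.
    have hj' : c (lf j) \in g i by rewrite hij /g !inE eqxx orbT.
    rewrite /g !inE in hj hj'.
    case=> [[|[|[|[|?]]]] hu] //=.
    + by rewrite eqxx.
    + by rewrite eqxx orbT.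
  - move=> u w; rewrite edgeE !vf.
    case: u => [[|[|[|[|?]]]] hu] //; case: w => [[|[|[|[|?]]]] hw] //; rewrite /s /twoK2 /E /=;
    have := ltn_ord i; have := ltn_ord j; lia.
have sub : g @: setT \subset [set A : {set 'I_k} | #|A| == 2].
  by apply/subsetP => A /imsetP [i _ ->]; rewrite inE cards2 ne.
by have := subset_leq_card sub; rewrite card_imset // card_draws !card_ord cardsT card_ord.
Qed.

Fixpoint pairs k : seq (nat * nat) :=
  if k is k'.+1 then pairs k' ++ [seq (x, k') | x <- iota 0 k'] else [::].

Lemma size_pairs k : size (pairs k) = 'C(k,2).
Proof. elim: k => [|k IH] //=; by rewrite size_cat IH size_map size_iota binS bin1. Qed.

Lemma mem_pairs k p : p \in pairs k -> p.1 < p.2 < k.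
Proof.
case: p => p1 p2 /=.
elim: k => [|k IH] //=; rewrite mem_cat => /orP [/IH|/mapP [x]]; first lia.
by rewrite mem_iota => hx [-> ->]; lia.
Qed.

Lemma uniq_pairs k : uniq (pairs k).
Proof.
elim: k => [|k IH] //=; rewrite cat_uniq IH /=; apply/andP; split.
  apply/hasPn => p /mapP [x _ ->]; apply/negP => /mem_pairs /=; lia.
rewrite map_inj_uniq ?iota_uniq //; by move=> x y [].
Qed.

Definition colv m (P : seq (nat*nat)) v :=
  if v == 0 then 0 else if v <= m then (nth (0,0) P v.-1).2 else (nth (0,0) P (v - m).-1).1.

Lemma colv_mid m (P : seq (nat*nat)) v : 1 <= v <= m -> colv m P v = (nth (0,0) P v.-1).2.
Proof. move=> h; rewrite /colv ifF ?ifT //; lia. Qed.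
Lemma colv_leaf m (P : seq (nat*nat)) v : 1 <= v <= m -> colv m P (v + m) = (nth (0,0) P v.-1).1.
Proof. move=> h; rewrite /colv ifF ?ifF; [by rewrite addnK | lia | lia]. Qed.

Lemma colv0 m P : colv m P 0 = 0. Proof. by []. Qed.

Lemma nth_pairs k m v : m <= 'C(k,2) -> 1 <= v <= m ->
  (nth (0,0) (pairs k) v.-1).1 < (nth (0,0) (pairs k) v.-1).2 < k.
Proof. move=> hm hv; apply: mem_pairs; apply: mem_nth; rewrite size_pairs; lia. Qed.
Arguments nth_pairs {k m v}.

Lemma colv_lt m k v : m <= 'C(k,2) -> 0 < k -> v < (m+m).+1 -> colv m (pairs k) v < k.
Proof.
move=> hm hk hv; rewrite /colv; case: ifP => // h0; case: ifP => h1.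
  have := @nth_pairs k m v hm; lia.
have := @nth_pairs k m (v - m) hm; lia.
Qed.

Lemma colorable m k : 1 <= m -> m <= 'C(k,2) -> H_colorable (subdivided_star (m+m).+1) twoK2 k.
Proof.
move=> hm1 hm.
case: k hm => [|k] hm; first by rewrite bin0n in hm; lia.
pose c (v : 'I_(m+m).+1) : 'I_k.+1 := inord (colv m (pairs k.+1) v).
have vc v : \val (c v) = colv m (pairs k.+1) v by apply: inordK; apply: colv_lt.
exists c; split.
- move=> x y; rewrite edgeE -val_eqE !vc /E.
  case/or4P => [/andP[/eqP -> h] | /andP[/eqP -> h] | /andP[h /eqP ->] | /andP[h /eqP ->]].
  + rewrite (colv_mid _ _ _ h) colv0; have := nth_pairs hm h; lia.
  + rewrite (colv_mid _ _ _ h) colv0; have := nth_pairs hm h; lia.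
  + rewrite (colv_mid _ _ _ h) (colv_leaf _ _ _ h); have := nth_pairs hm h; lia.
  + rewrite (colv_mid _ _ _ h) (colv_leaf _ _ _ h); have := nth_pairs hm h; lia.
- move=> i j nij [f [finj hcl hed]].
  have := @extract m f finj hed => /=.
  set x := val (f (inord 0)); set y := val (f (inord 1)).
  set z := val (f (inord 2)); set w := val (f (inord 3)).
  set a := minn x y; set b := minn z w.
  case=> ha hb nab /andP [hax hay] /andP [hbz hbw].
  have inC v : [|| v == x, v == y, v == z | v == w] ->
      (colv m (pairs k.+1) v == val i) || (colv m (pairs k.+1) v == val j).
    have H u : (colv m (pairs k.+1) (val (f u)) == val i) || (colv m (pairs k.+1) (val (f u)) == val j).
      by have := hcl u; rewrite -!val_eqE !vc.
    by case/or4P => /eqP ->; apply: H.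
  have c1 : _ := inC a ltac:(by case/orP: hax => ->; rewrite ?orbT).
  have c2 : _ := inC (a + m) ltac:(by case/orP: hay => ->; rewrite ?orbT).
  have c3 : _ := inC b ltac:(by case/orP: hbz => ->; rewrite ?orbT).
  have c4 : _ := inC (b + m) ltac:(by case/orP: hbw => ->; rewrite ?orbT).
  clear inC hax hay hbz hbw.
  rewrite colv_mid // in c1; rewrite colv_leaf // in c2.
  rewrite colv_mid // in c3; rewrite colv_leaf // in c4.
  have na := nth_pairs hm ha; have nb := nth_pairs hm hb.
  have nij' : val i != val j by [].
  have : nth (0,0) (pairs k.+1) a.-1 == nth (0,0) (pairs k.+1) b.-1.
    move: c1 c2 c3 c4 na nb.
    case: (nth (0,0) (pairs k.+1) a.-1) => p1 p2; case: (nth (0,0) (pairs k.+1) b.-1) => q1 q2 /=.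
    rewrite xpair_eqE; lia.
  clear c1 c2 c3 c4 na nb.
  rewrite nth_uniq ?size_pairs ?uniq_pairs; lia.
Qed.

Lemma C2 k : 'C(k,2) + 'C(k,2) + k = k * k.
Proof. elim: k => [|k IH]; first by rewrite bin0n. rewrite binS bin1. nia. Qed.

Local Open Scope ring_scope.
Lemma rl1 : forall (s a D K M : R), a = M + M + 1/4 -> 0 <= s -> s^+2 = a -> 1 <= M -> D + D + K = K * K -> 0 <= K -> 0 <= D ->
  s + 1/2 <= K + 1 -> M <= D + K.
Proof. move=> s a D K M ha hs h2 hM hc hK hD h.
have := @mulr_ge0 _ (K + 1/2 - s) (K+1/2+s). rewrite expr2 in h2. nra. Qed.
Lemma rl2 : forall (s a D K M : R), a = M + M + 1/4 -> 0 <= s -> s^+2 = a -> 1 <= M -> D + D + K = K * K -> 0 <= K -> 0 <= D ->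
  K < s + 1/2 -> D < M.
Proof. move=> s a D K M ha hs h2 hM hc hK hD h. rewrite expr2 in h2.
case: (lerP (1/2) K) => hk.
  have := @mulr_gt0 _ (s - (K - 1/2)) (s + (K-1/2)). nra.
nra. Qed.
Lemma rl3 : forall (s a D K M : R), a = M + M + 1/4 -> 0 <= s -> s^+2 = a -> 1 <= M -> D + D + K = K * K -> 0 <= K -> 0 <= D ->
  D < M -> K < s + 1/2.
Proof. move=> s a D K M ha hs h2 hM hc hK hD h. rewrite expr2 in h2.
case: (lerP (1/2) K) => hk; last lra.
have := @mulr_ge0 _ (K - 1/2 - s) (K-1/2+s). nra. Qed.
Lemma rl4 : forall (s a D K M : R), a = M + M + 1/4 -> 0 <= s -> s^+2 = a -> 1 <= M -> D + D + K = K * K -> 0 <= K -> 0 <= D ->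
  M <= D + K -> s + 1/2 <= K + 1.
Proof. move=> s a D K M ha hs h2 hM hc hK hD h. rewrite expr2 in h2.
have := @mulr_gt0 _ (s - (K + 1/2)) (s + (K+1/2)). nra. Qed.

Lemma real_part (m k : nat) (hm : (1 <= m)%N) :
  Posz k = Num.ceil (Num.sqrt ((((m+m).+1)%:R : R) - 3 / 4) + 1/2) <->
  (m <= 'C(k,2) /\ 'C(k.-1,2) < m)%N.
Proof.
set a := (((m+m).+1)%:R : R) - 3 / 4.
have ha : a = m%:R + m%:R + 1/4 by rewrite /a -addn1 !natrD; field.
have a0 : 0 <= a by rewrite ha; have := ler0n R m; lra.
have hs0 := sqrtr_ge0 a.
have hs2 : Num.sqrt a ^+ 2 = a by rewrite sqr_sqrtr.
set s := Num.sqrt a in hs0 hs2 *.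
have hM : (1 <= m%:R :> R) by rewrite ler1n.
case: k => [|k'].
  rewrite bin0n; split => [h|]; last by lia.
  exfalso. have : (0 < Num.ceil (s + 1/2)) by rewrite ceil_gt0; lra.
  by rewrite -h.
rewrite binS bin1 /=.
have hc := C2 k'.
have hcR : ('C(k',2)%:R + 'C(k',2)%:R + k'%:R = k'%:R * k'%:R :> R)
  by rewrite -!natrD -natrM hc.
have hk0 := ler0n R k'.
have hd0 := ler0n R 'C(k',2).
set D := 'C(k',2)%:R in hcR hd0 *.
set K := k'%:R in hcR hk0 *.
set M := m%:R in ha hM *.
split.
- move=> h. have /eqP := esym h. rewrite ceil_eq.
  have -> : ((Posz k'.+1 - 1)%:~R = K :> R) by rewrite /K -addn1 PoszD addrK.
  have -> : ((Posz k'.+1)%:~R = K + 1 :> R) by rewrite /K natr1.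
  case/andP => h1 h2.
  have e1 : M <= D + K by apply: (rl1 _ _ _ _ _ ha hs0 hs2 hM hcR hk0 hd0).
  have e2 : D < M by apply: (rl2 _ _ _ _ _ ha hs0 hs2 hM hcR hk0 hd0).
  split.
    by rewrite -(ler_nat R) natrD.
  by rewrite -(ltr_nat R).
- case => h1 h2.
  have e1 : M <= D + K by rewrite /M /D /K -natrD ler_nat.
  have e2 : D < M by rewrite /M /D ltr_nat.
  apply/esym/eqP; rewrite ceil_eq.
  have -> : ((Posz k'.+1 - 1)%:~R = K :> R) by rewrite /K -addn1 PoszD addrK.
  have -> : ((Posz k'.+1)%:~R = K + 1 :> R) by rewrite /K natr1.
  apply/andP; split; [exact: (rl3 _ _ _ _ _ ha hs0 hs2 hM hcR hk0 hd0)|exact: (rl4 _ _ _ _ _ ha hs0 hs2 hM hcR hk0 hd0)].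
Qed.


Theorem corollary4 (n : nat) (hn : (3 <= n)%N) (hodd : odd n) (k : nat) :
  is_chi_H (subdivided_star n) twoK2 k <->
  Posz k = Num.ceil (Num.sqrt ((n%:R : R) - 3 / 4) + 1/2).
Proof.
have [m hnm] : exists m, n = (m+m).+1 by exists n./2; lia.
subst n.
have hm : (1 <= m)%N by lia.
rewrite real_part //.
have col k' : H_colorable (subdivided_star (m+m).+1) twoK2 k' <-> (m <= 'C(k',2))%N.
  by split; [case=> c hc; exact: col_bound hc | exact: colorable].
rewrite /is_chi_H col; split.
- case=> h1 h2; split => //.
  case: k h1 h2 => [|k] h1 h2; first by rewrite bin0n in h1; lia.
  rewrite ltnNge; apply/negP => h; have := h2 k ((col k).2 h); lia.
- case=> h1 h2; split => // k' /col hk'.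
  rewrite leqNgt; apply/negP => hlt.
  have : ('C(k',2) <= 'C(k.-1,2))%N by apply: leq_bin2l; lia.
  lia.
Qed.
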